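(* Let $(u_k)_{k\in\mathbb N}$, with associated $(\tau_k)$, be generated by the proximal-gradient algorithm and assume $\nabla F$ is Lipschitz continuous from $L^2(0,T)$ to $L^2(0,T)$. Let $\bar u\in U_{ad}$ be the weak-$\star$ limit of $(u_k)$ in $\mathrm{BV}(0,T)$. Then for every accumulation point $\bar\tau$ of $(\tau_k)$, $\bar u$ solves \[\min_{u\in U_{ad}}\ F(\bar u)+(\nabla F(\bar u),u-\bar u)_{L^2(0,T)}+\frac{\bar\tau}2\|u-\bar u\|_{L^2(0,T)}^2+\beta\mathrm{TV}(u).\]
   Context: $T>0$, $\beta>0$; $\nu_1<\dots<\nu_d$ are integers. $\mathrm{TV}(u):=\sup\{\int_0^T u\varphi'\,dt : \varphi\in C_c^1(0,T),\ \|\varphi\|_\infty\le 1\}$, $\mathrm{BV}(0,T)=\{u\in L^1(0,T):\mathrm{TV}(u)<\infty\}$. $U_{ad}:=\{u\in L^1(0,T): u(t)\in\{\nu_1,\dots,\nu_d\}\text{ a.e.}\}$. $F:L^1(0,T)\to\mathbb R$ is bounded from below and Gâteaux differentiable on $L^2(0,T)$ with gradient $\nabla F(u)\in L^2(0,T)$. $G(u):=\beta\mathrm{TV}(u)+\delta_{U_{ad}}(u)$ with $\delta_{U_{ad}}$ the indicator ($0$ on $U_{ad}$, $\infty$ elsewhere). Proximal-gradient algorithm: given $u_0\in U_{ad}\cap\mathrm{BV}(0,T)$ and $\eta>0$, for $k=0,1,\dots$ choose $\tau_k>0$ and a solution $u_{k+1}$ of $\min_{u\in L^2(0,T)} F(u_k)+(\nabla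 F(u_k),u-u_k)_{L^2}+\frac{\tau_k}2\|u-u_k\|_{L^2}^2+G(u)$ satisfying $\eta\|u_{k+1}-u_k\|_{L^2}^2\le F(u_k)+\beta\mathrm{TV}(u_k)-(F(u_{k+1})+\beta\mathrm{TV}(u_{k+1}))$. Under these assumptions such a sequence converges weakly-$\star$ in $\mathrm{BV}(0,T)$ to some $\bar u\in U_{ad}$. *)

(* Defs.v *)
From HB Require Import structures.
From mathcomp Require Import all_boot all_order all_algebra.
From mathcomp Require Import all_classical all_reals all_analysis.
Set Implicit Arguments. Unset Strict Implicit. Unset Printing Implicit Defensive.
Import Order.TTheory GRing.Theory Num.Theory.
Import numFieldNormedType.Exports.
Local Open Scope classical_set_scope.
Local Open Scope ring_scope.

Section Defs.
Variable R : realType.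
Local Notation mu := (@lebesgue_measure R).

Definition Dom (T : R) : set R := `]0, T[.

(* u ∈ L^1(0,T) (a representative) *)
Definition L1 (T : R) (u : R -> R) : Prop :=
  mu.-integrable (Dom T) (EFin \o u).

Definition L2 (T : R) (u : R -> R) : Prop :=
  measurable_fun (Dom T) u /\
  mu.-integrable (Dom T) (fun x => ((u x) ^+ 2)%:E).

Definition inner2 (T : R) (u v : R -> R) : R :=
  Rintegral mu (Dom T) (fun x => u x * v x).

Definition nrm2sq (T : R) (u : R -> R) : R :=
  Rintegral mu (Dom T) (fun x => (u x) ^+ 2).
Definition nrm2 (T : R) (u : R -> R) : R := Num.sqrt (nrm2sq T u).

Definition ae_eq_on (T : R) (u v : R -> R) : Prop :=
  {ae mu, forall x, Dom T x -> u x = v x}.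

Definition Cc1 (T : R) (phi : R -> R) : Prop :=
  (forall x, derivable phi x 1) /\ continuous (derive1 phi) /\
  exists a b : R, 0 < a /\ a <= b /\ b < T /\
    (forall x, x < a \/ b < x -> phi x = 0).

Definition TV (T : R) (u : R -> R) : \bar R :=
  ereal_sup [set r | exists phi : R -> R,
     [/\ Cc1 T phi, (forall x, `|phi x| <= 1) &
         r = (\int[mu]_(x in Dom T) (u x * derive1 phi x)%:E)%E]].

Definition BV (T : R) (u : R -> R) : Prop := L1 T u /\ (TV T u < +oo)%E.

Definition Uad (T : R) (d : nat) (nu : 'I_d -> int) (u : R -> R) : Prop :=
  L1 T u /\ {ae mu, forall t, Dom T t -> exists i : 'I_d, u t = (nu i)%:~R}.

Definition deltaUad (T : R) (d : nat) (nu : 'I_d -> int) (u : R -> R) : \bar R :=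
  if `[< Uad T nu u >] then 0%E else +oo%E.

Definition Gfun (T beta : R) (d : nat) (nu : 'I_d -> int) (u : R -> R) : \bar R :=
  (beta%:E * TV T u + deltaUad T nu u)%E.

Definition lin_quad (T : R) (F : (R -> R) -> R) (gradF : (R -> R) -> R -> R)
  (w : R -> R) (tau : R) (u : R -> R) : R :=
  F w + inner2 T (gradF w) (fun x => u x - w x)
      + tau / 2 * nrm2sq T (fun x => u x - w x).

(* weak-* convergence in BV(0,T): convergence in L^1 and boundedness in BV
   (Ambrosio–Fusco–Pallara, Prop. 3.13) *)
Definition weak_star_BV (T : R) (u : nat -> R -> R) (ub : R -> R) : Prop :=
  (forall k, BV T (u k)) /\ BV T ub /\
  (fun k => Rintegral mu (Dom T) (fun x => `|u k x - ub x|)) @ \oo --> (0 : R) /\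
  exists M : R, forall k, (TV T (u k) <= M%:E)%E.

Definition acc_point (tau : nat -> R) (tb : R) : Prop :=
  forall e : R, 0 < e -> forall N : nat, exists k : nat, (N <= k)%N /\ `|tau k - tb| < e.

End Defs.

(* Main.v *)
Require Import Defs.
From HB Require Import structures.
From mathcomp Require Import all_boot all_order all_algebra.
From mathcomp Require Import all_classical all_reals all_analysis.
From mathcomp Require Import ring lra.
Import Order.TTheory GRing.Theory Num.Theory.
Import numFieldNormedType.Exports.
Local Open Scope classical_set_scope.
Local Open Scope ring_scope.

Lemma sqr_normr' {R : realType} (x : R) : `|x| ^+ 2 = x ^+ 2.
Proof. exact: real_normK (num_real x). Qed.

Lemma mD {R : realType} (T : R) : measurable (Dom T : set (measurableTypeR R)).
Proof. rewrite /Dom; exact: measurable_itv. Qed.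

Notation intR T f := ((@lebesgue_measure _).-integrable (Dom T) (EFin \o f)).

Lemma intRD {R : realType} {T : R} {f g : R -> R} : intR T f -> intR T g ->
  intR T (fun x => f x + g x).
Proof.
move=> hf hg; have := integrableD (mD T) hf hg.
apply: (eq_integrable (mD T)).
by move=> x _ /=; rewrite EFinD.
Qed.

Lemma intRZ {R : realType} {T : R} (k : R) {f : R -> R} : intR T f ->
  intR T (fun x => k * f x).
Proof.
move=> hf; apply: (eq_integrable (mD T) _ _ _ (integrableZl (mD T) k hf)).
by move=> x _ /=; rewrite EFinM.
Qed.

Lemma intRB {R : realType} {T : R} {f g : R -> R} : intR T f -> intR T g ->
  intR T (fun x => f x - g x).
Proof.
move=> hf hg; have := intRD hf (intRZ (-1) hg).
apply: (eq_integrable (mD T)) => x _ /=; congr EFin; ring.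
Qed.

Lemma intR_abs {R : realType} {T : R} {f : R -> R} : intR T f -> intR T (fun x => `|f x|).
Proof.
move=> hf; apply: (eq_integrable (mD T) _ _ _ (integrable_abse hf)).
by move=> x _ /=.
Qed.

Lemma L2_meas {R : realType} {T : R} {f : R -> R} : L2 T f -> measurable_fun (Dom T) f.
Proof. by case. Qed.

Lemma L2_sq {R : realType} {T : R} {f : R -> R} : L2 T f -> intR T (fun x => f x ^+ 2).
Proof. by case. Qed.

Lemma L2_intM {R : realType} {T : R} {f g : R -> R} : L2 T f -> L2 T g ->
  intR T (fun x => f x * g x).
Proof.
move=> [mf if2] [mg ig2].
apply: (le_integrable (mD T) _ _ (intRD if2 ig2)).
  by apply/measurable_realfun.measurable_EFinP; exact: measurable_realfun.measurable_funM.
move=> x _ /=; rewrite lee_fin.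
rewrite (@ger0_norm _ (f x ^+ 2 + g x ^+ 2)); last by rewrite addr_ge0 // sqr_ge0.
rewrite normrM -(sqr_normr' (f x)) -(sqr_normr' (g x)).
have := normr_ge0 (f x); have := normr_ge0 (g x); nra.
Qed.

Lemma L2D {R : realType} {T : R} {f g : R -> R} : L2 T f -> L2 T g ->
  L2 T (fun x => f x + g x).
Proof.
move=> hf hg; split; first by apply: measurable_realfun.measurable_funD; [case: hf|case: hg].
have := intRD (L2_sq hf) (intRD (intRZ 2 (L2_intM hf hg)) (L2_sq hg)).
apply: (eq_integrable (mD T)) => x _ /=; congr EFin; ring.
Qed.

Lemma L2Z {R : realType} {T : R} (k : R) {f : R -> R} : L2 T f ->
  L2 T (fun x => k * f x).
Proof.
move=> hf; split.
  by apply: measurable_realfun.measurable_funM => //; case: hf.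
have := intRZ (k ^+ 2) (L2_sq hf).
apply: (eq_integrable (mD T)) => x _ /=; congr EFin; ring.
Qed.

Lemma L2N {R : realType} {T : R} {f : R -> R} : L2 T f -> L2 T (fun x => - f x).
Proof.
move=> hf; have [h1 h2] := L2Z (-1) hf; split.
  by apply: eq_measurable_fun h1 => x _; ring.
by apply: (eq_integrable (mD T) _ _ _ h2) => x _ /=; congr EFin; ring.
Qed.

Lemma L2B {R : realType} {T : R} {f g : R -> R} : L2 T f -> L2 T g ->
  L2 T (fun x => f x - g x).
Proof. by move=> hf hg; apply: L2D hf (L2N hg). Qed.

Lemma Q_ge0 {R : realType} (T : R) (f : R -> R) : 0 <= nrm2sq T f.
Proof. by apply: Rintegral_ge0 => x _; exact: sqr_ge0. Qed.

Lemma QD {R : realType} {T : R} (s : R) {f g : R -> R} : L2 T f -> L2 T g ->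
  nrm2sq T (fun x => s * f x + g x) =
  s ^+ 2 * nrm2sq T f + 2 * s * inner2 T f g + nrm2sq T g.
Proof.
move=> hf hg; rewrite /nrm2sq /inner2.
have -> : Rintegral (@lebesgue_measure R) (Dom T) (fun x => (s * f x + g x) ^+ 2) =
  Rintegral (@lebesgue_measure R) (Dom T) (fun x => s ^+ 2 * f x ^+ 2 +
   ((2 * s) * (f x * g x) + g x ^+ 2)).
  by apply: eq_Rintegral => x _; ring.
rewrite RintegralD //; first last.
- exact: intRD (intRZ _ (L2_intM hf hg)) (L2_sq hg).
- exact: intRZ _ (L2_sq hf).
- exact: mD.
rewrite RintegralD //; first last.
- exact: L2_sq hg.
- exact: intRZ _ (L2_intM hf hg).
- exact: mD.
rewrite !RintegralZl //; first last.
- exact: L2_sq hf.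
- exact: mD.
- exact: L2_intM hf hg.
- exact: mD.
ring.
Qed.

Lemma disc {R : realType} (A I B : R) : 0 <= A ->
  (forall s : R, 0 <= s ^+ 2 * A + 2 * s * I + B) -> I ^+ 2 <= A * B.
Proof.
move=> A0 H; have [A00|Ap] := eqVneq A 0.
  rewrite A00 in H *.
  have [I0|IN0] := eqVneq I 0; first by rewrite I0 expr0n /= mul0r.
  have := H (- (B + 1) / (2 * I)).
  have -> : (- (B + 1) / (2 * I)) ^+ 2 * 0 + 2 * (- (B + 1) / (2 * I)) * I + B = -1.
    by field.
  by rewrite ler0N1.
have Apos : 0 < A by rewrite lt_neqAle eq_sym Ap A0.
have := H (- I / A).
have -> : (- I / A) ^+ 2 * A + 2 * (- I / A) * I + B = B - I ^+ 2 / A.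
  by field.
rewrite subr_ge0 ler_pdivrMr // => h.
by rewrite mulrC.
Qed.

Lemma CS {R : realType} {T : R} {f g : R -> R} : L2 T f -> L2 T g ->
  inner2 T f g ^+ 2 <= nrm2sq T f * nrm2sq T g.
Proof.
move=> hf hg; apply: disc; first exact: Q_ge0.
by move=> s; rewrite -QD //; exact: Q_ge0.
Qed.

Lemma Qsum {R : realType} {T : R} {f g : R -> R} : L2 T f -> L2 T g ->
  nrm2sq T (fun x => f x + g x) <= 2 * nrm2sq T f + 2 * nrm2sq T g.
Proof.
move=> hf hg.
have -> : nrm2sq T (fun x => f x + g x) = nrm2sq T (fun x => 1 * f x + g x).
  by apply: eq_Rintegral => x _; rewrite mul1r.
rewrite QD //.
have := CS hf hg; have := Q_ge0 T f; have := Q_ge0 T g.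
set A := nrm2sq T f; set B := nrm2sq T g; set I := inner2 T f g.
move=> B0 A0 h.
have : 2 * I <= A + B.
  have [//|hI] := lerP (2 * I) (A + B).
  have hp : 0 < 2 * I + A + B by lra.
  have hq : 0 < (2 * I - A - B) * (2 * I + A + B) by apply: mulr_gt0; lra.
  have hs := sqr_ge0 (A - B).
  move: h hq hs; rewrite !expr2 => h hq hs.
  nra.
rewrite expr1n; lra.
Qed.

Lemma Qdiff {R : realType} {T : R} {f g : R -> R} : L2 T f -> L2 T g ->
  nrm2sq T (fun x => f x - g x) <= 2 * nrm2sq T f + 2 * nrm2sq T g.
Proof.
move=> hf hg; have := Qsum hf (L2N hg).
have -> : nrm2sq T (fun x => - g x) = nrm2sq T g.
  by apply: eq_Rintegral => x _; rewrite sqrrN.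
by [].
Qed.


Lemma muD_fin {R : realType} (T : R) : (@lebesgue_measure R (Dom T) < +oo)%E.
Proof.
rewrite /Dom lebesgue_measure_itv /=; case: ifP => _ //; exact: ltry.
Qed.

Lemma aeS {R : realType} (P Q : R -> Prop) : (forall x, P x -> Q x) ->
  {ae @lebesgue_measure R, forall x, P x} -> {ae @lebesgue_measure R, forall x, Q x}.
Proof.
move=> PQ; exact: (@filterS _ _ (ae_filter_ringOfSetsType (@lebesgue_measure R)) _ _ PQ).
Qed.

Lemma aeS2 {R : realType} (P Q S : R -> Prop) : (forall x, P x -> Q x -> S x) ->
  {ae @lebesgue_measure R, forall x, P x} -> {ae @lebesgue_measure R, forall x, Q x} ->
  {ae @lebesgue_measure R, forall x, S x}.
Proof.
move=> PQ; exact: (@filterS2 _ _ (ae_filter_ringOfSetsType (@lebesgue_measure R)) _ _ _ PQ).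
Qed.

Definition Mnu {R : realType} {d : nat} (nu : 'I_d -> int) : R :=
  \sum_(i < d) `|(nu i)%:~R : R|.

Lemma Mnu_ge0 {R : realType} {d : nat} (nu : 'I_d -> int) : 0 <= Mnu nu :> R.
Proof. by apply: sumr_ge0 => i _. Qed.

Lemma Uad_meas {R : realType} {T : R} {d : nat} {nu : 'I_d -> int} {u : R -> R} :
  Uad T nu u -> measurable_fun (Dom T) u.
Proof. by move=> [/integrableP [mf _] _]; exact/measurable_realfun.measurable_EFinP. Qed.

Lemma Uad_L1 {R : realType} {T : R} {d : nat} {nu : 'I_d -> int} {u : R -> R} :
  Uad T nu u -> intR T u.
Proof. by case. Qed.

Lemma Uad_bnd {R : realType} {T : R} {d : nat} {nu : 'I_d -> int} {u : R -> R} :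
  Uad T nu u -> {ae @lebesgue_measure R, forall x, Dom T x -> `|u x| <= Mnu nu}.
Proof.
move=> [_ H]; apply: aeS H => x Hx Dx; have [i ->] := Hx Dx.
rewrite /Mnu (bigD1 i) //= lerDl; exact: sumr_ge0.
Qed.

Lemma ae_Q {R : realType} {T : R} {f : R -> R} (K : R) : 0 <= K ->
  measurable_fun (Dom T) f -> intR T f ->
  {ae @lebesgue_measure R, forall x, Dom T x -> `|f x| <= K} ->
  nrm2sq T f <= K * Rintegral (@lebesgue_measure R) (Dom T) (fun x => `|f x|).
Proof.
move=> K0 mf iF H.
rewrite -RintegralZl //; [| exact: mD | exact: intR_abs iF].
have iK : intR T (fun x => K * `|f x|) := intRZ K (intR_abs iF).
rewrite /nrm2sq /Rintegral.
have le : (\int[@lebesgue_measure R]_(x in Dom T) ((f x ^+ 2)%:E) <=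
           \int[@lebesgue_measure R]_(x in Dom T) ((K * `|f x|)%:E))%E.
  apply: ae_ge0_le_integral.
  - exact: mD.
  - by move=> x _; rewrite lee_fin; exact: sqr_ge0.
  - by apply/measurable_realfun.measurable_EFinP; exact: measurable_realfun.measurable_funX.
  - by move=> x Dx; rewrite lee_fin; apply: mulr_ge0.
  - apply/measurable_realfun.measurable_EFinP; apply: measurable_realfun.measurable_funM => //.
    exact: measurableT_comp.
  - apply: aeS H => x Hx Dx; rewrite lee_fin -sqr_normr' expr2.
    by apply: ler_wpM2r => //; exact: Hx.
have fin := integrable_fin_num (mD T) iK.
apply: fine_le => //.
rewrite ge0_fin_numE; last by apply: integral_ge0 => x _; rewrite lee_fin sqr_ge0.
apply: le_lt_trans le _.
by move/fin_numPlt: fin => /andP[_ ->].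
Qed.

Lemma bnd_L2 {R : realType} {T : R} {f : R -> R} (K : R) :
  measurable_fun (Dom T) f ->
  {ae @lebesgue_measure R, forall x, Dom T x -> `|f x| <= K} -> L2 T f.
Proof.
move=> mf H; split => //.
apply/integrableP; split.
  by apply/measurable_realfun.measurable_EFinP; exact: measurable_realfun.measurable_funX.
have -> : (\int[@lebesgue_measure R]_(x in Dom T) `|(f x ^+ 2)%:E|)%E =
   (\int[@lebesgue_measure R]_(x in Dom T) (f x ^+ 2)%:E)%E.
  by apply: eq_integral => x _; rewrite abse_EFin ger0_norm // sqr_ge0.
apply: (@le_lt_trans _ _ (\int[@lebesgue_measure R]_(x in Dom T) (cst ((K ^+ 2)%:E) x))%E).
  apply: ae_ge0_le_integral.
  - exact: mD.
  - by move=> x _; rewrite lee_fin sqr_ge0.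
  - by apply/measurable_realfun.measurable_EFinP; exact: measurable_realfun.measurable_funX.
  - by move=> x _; rewrite lee_fin sqr_ge0.
  - exact: measurable_cst.
  - apply: aeS H => x Hx Dx /=; rewrite lee_fin.
    rewrite -sqr_normr'.
    have := Hx Dx; have := normr_ge0 (f x); rewrite !expr2; nra.
rewrite integral_cst; last exact: mD.
apply: lte_mul_pinfty => //; last exact: muD_fin.
by rewrite lee_fin sqr_ge0.
Qed.

Lemma Uad_L2 {R : realType} {T : R} {d : nat} {nu : 'I_d -> int} {u : R -> R} :
  Uad T nu u -> L2 T u.
Proof. by move=> h; apply: (bnd_L2 (Mnu nu) (Uad_meas h) (Uad_bnd h)). Qed.

Lemma TV_ge0 {R : realType} {T : R} (u : R -> R) : 0 < T -> (0 <= TV T u)%E.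
Proof.
move=> T0; apply: ereal_sup_ubound; exists (cst 0); split.
- split; first by move=> x; exact: derivable_cst.
  split.
    have -> : derive1 (cst (0:R)) = cst 0 by apply/funext => x; exact: derive1_cst.
    exact: cst_continuous.
  exists (T / 2), (T / 2); split; first lra.
  split; first lra.
  split; first lra.
  by [].
- by move=> x; rewrite normr0.
- under eq_integral do rewrite derive1_cst mulr0.
  by rewrite integral0.
Qed.

Lemma TV_elem {R : realType} {T : R} (u phi : R -> R) : Cc1 T phi ->
  (forall x, `|phi x| <= 1) -> intR T (fun x => u x * derive1 phi x) ->
  ((Rintegral (@lebesgue_measure R) (Dom T) (fun x => u x * derive1 phi x))%:E
     <= TV T u)%E.
Proof.
move=> hc hb hi; apply: ereal_sup_ubound; exists phi; split => //.
rewrite /Rintegral fineK //; have := integrable_fin_num (mD T) hi; by [].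
Qed.

Lemma cont_L2 {R : realType} {T : R} (g : R -> R) : continuous g -> L2 T g.
Proof.
move=> cg; split.
  exact: measurable_funS (measurable_realfun.continuous_measurable_fun cg).
have : (@lebesgue_measure R).-integrable `[0, T] (EFin \o (fun x => g x * g x)).
  apply: continuous_compact_integrable; first exact: segment_compact.
  by apply: continuous_subspaceT => x; apply: continuousM; exact: cg.
move=> h; have := integrableS _ (mD T) _ h.
have sub : Dom T `<=` `[0, T].
  move=> x; rewrite /Dom /= !in_itv /= => /andP[h1 h2].
  by apply/andP; split; exact: ltW.
move=> /(_ (measurable_itv _) sub).
by apply: (eq_integrable (mD T)) => x _ /=; rewrite expr2.
Qed.


Lemma poly_cvg0 {R : realType} {D : nat -> R} (P Q : R) : D @ \oo --> (0:R) ->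
  (fun k => P * D k + Q * (D k * D k)) @ \oo --> (0:R).
Proof.
move=> hD.
have -> : (0:R) = P * 0 + Q * (0 * 0) by rewrite !mulr0 addr0.
apply: cvgD; first by apply: cvgM => //; exact: cvg_cst.
by apply: cvgM; [exact: cvg_cst | apply: cvgM].
Qed.

Lemma sq_cvg {R : realType} (x : nat -> R) (l : R) (D : nat -> R) (P Q : R) :
  D @ \oo --> (0:R) ->
  (forall k, (x k - l) ^+ 2 <= P * D k + Q * (D k * D k)) -> x @ \oo --> l.
Proof.
move=> hD hb; apply/subr_cvg0; apply/cvgr0Pnorm_lt => e e0.
have := (cvgr0Pnorm_lt _).1 (poly_cvg0 P Q hD) (e ^+ 2) (exprn_gt0 _ e0).
move=> H; near=> k.
have hk : `|P * D k + Q * (D k * D k)| < e ^+ 2 by near: k; exact: H.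
have h1 := le_lt_trans (hb k) (le_lt_trans (ler_norm _) hk).
rewrite -sqr_normr' in h1; have := normr_ge0 (x k - l).
move: h1; rewrite !expr2 => h1 h2; nra.
Unshelve. all: by end_near.
Qed.

Lemma le_eps {R : realType} (x y C : R) : 0 < C ->
  (forall e, 0 < e -> e <= 1 -> x <= y + e * C) -> x <= y.
Proof.
move=> C0 H; rewrite leNgt; apply/negP => yx.
pose e := Num.min 1 ((x - y) / (2 * C)).
have e0 : 0 < e.
  rewrite /e lt_min ltr01 /=; apply: divr_gt0; [by rewrite subr_gt0 | lra].
have e1 : e <= 1 by rewrite /e ge_min lexx.
have e2 : e * (2 * C) <= x - y.
  have : e <= (x - y) / (2 * C) by rewrite /e ge_min lexx orbT.
  by rewrite ler_pdivlMr //; lra.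
have := H e e0 e1; lra.
Qed.

Lemma final_lim {R : realType} (s e tau : nat -> R) (s0 e0 tb W : R) :
  s @ \oo --> s0 -> e @ \oo --> e0 -> acc_point tau tb ->
  (forall k, s k <= tau k / 2 * e k + W) -> s0 <= tb / 2 * e0 + W.
Proof.
move=> hs he ha hk.
apply: (@le_eps _ _ _ (1 + (`|tb| + 1 + `|e0|) / 2)).
  by have := normr_ge0 tb; have := normr_ge0 e0; lra.
move=> ep ep0 ep1.
have [N1 _ H1] := (cvgrPdist_lt _ _).1 hs ep ep0.
have [N2 _ H2] := (cvgrPdist_lt _ _).1 he ep ep0.
have [k [Nk hk']] := ha ep ep0 (N1 + N2)%N.
have k1 : (N1 <= k)%N by apply: leq_trans Nk; exact: leq_addr.
have k2 : (N2 <= k)%N by apply: leq_trans Nk; exact: leq_addl.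
have hs1 : `|s0 - s k| < ep := H1 k k1.
have he1 : `|e0 - e k| < ep := H2 k k2.
have hsk := hk k.
have ht : `|tau k| <= `|tb| + 1.
  have := ler_normD tb (tau k - tb); rewrite addrC subrK; lra.
have h1 : tau k * (e k - e0) <= (`|tb| + 1) * ep.
  apply: le_trans (ler_norm _) _; rewrite normrM; apply: ler_pM => //.
  by rewrite distrC ltW.
have h2 : (tau k - tb) * e0 <= ep * `|e0|.
  apply: le_trans (ler_norm _) _; rewrite normrM; apply: ler_pM => //.
  exact: ltW.
move: hs1; rewrite ltr_norml => /andP[hs1 hs2].
lra.
Qed.


Lemma RintB_eq {R : realType} {T : R} (f1 f2 h : R -> R) : intR T f1 -> intR T f2 ->
  (forall x, f1 x - f2 x = h x) ->
  Rintegral (@lebesgue_measure R) (Dom T) f1 - Rintegral (@lebesgue_measure R) (Dom T) f2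
  = Rintegral (@lebesgue_measure R) (Dom T) h.
Proof.
move=> i1 i2 e; have := RintegralB (mD T) i1 i2 => <-.
by apply: eq_Rintegral => x _; rewrite e.
Qed.

Lemma RintD_eq {R : realType} {T : R} (f1 f2 h : R -> R) : intR T f1 -> intR T f2 ->
  (forall x, f1 x + f2 x = h x) ->
  Rintegral (@lebesgue_measure R) (Dom T) f1 + Rintegral (@lebesgue_measure R) (Dom T) f2
  = Rintegral (@lebesgue_measure R) (Dom T) h.
Proof.
move=> i1 i2 e; have := RintegralD (mD T) i1 i2 => <-.
by apply: eq_Rintegral => x _; rewrite e.
Qed.

Lemma Q_eq {R : realType} {T : R} (f1 f2 : R -> R) :
  (forall x, f1 x ^+ 2 = f2 x ^+ 2) -> nrm2sq T f1 = nrm2sq T f2.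
Proof. by move=> e; apply: eq_Rintegral => x _; rewrite e. Qed.

Lemma TVfin {R : realType} {T : R} {w : R -> R} : 0 < T -> BV T w ->
  exists r : R, TV T w = r%:E.
Proof.
move=> T0 [_ hw]; move: (TV_ge0 w T0) hw.
by case: (TV T w) => [r _ _| // | //]; exists r.
Qed.

Theorem theorem4p2 (R : realType) (T beta eta : R) (d : nat) (nu : 'I_d -> int)
  (F : (R -> R) -> R) (gradF : (R -> R) -> R -> R)
  (u : nat -> R -> R) (tau : nat -> R) (ubar : R -> R) (taubar : R) :
  0 < T -> 0 < beta -> 0 < eta ->
  (* nu_1 < ... < nu_d *)
  (forall i j : 'I_d, (i < j)%N -> nu i < nu j) ->
  (* F : L^1(0,T) -> R is well defined on a.e.-classes *)
  (forall v w, L1 T v -> L1 T w -> ae_eq_on T v w -> F v = F w) ->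
  (* F is bounded from below *)
  (exists m : R, forall v, L1 T v -> m <= F v) ->
  (* F is Gateaux differentiable on L^2 with gradient gradF v in L^2 *)
  (forall v, L2 T v ->
     L2 T (gradF v) /\
     forall h, L2 T h ->
       (fun s : R => (F (fun x => v x + s * h x) - F v) / s) @ 0^'
         --> inner2 T (gradF v) h) ->
  (* gradF is Lipschitz continuous from L^2 to L^2 *)
  (exists L : R, forall v w, L2 T v -> L2 T w ->
     nrm2 T (fun x => gradF v x - gradF w x) <= L * nrm2 T (fun x => v x - w x)) ->
  (* the proximal-gradient iteration *)
  Uad T nu (u 0%N) -> BV T (u 0%N) ->
  (forall k, 0 < tau k) ->
  (forall k, L2 T (u k.+1) /\
     forall v, L2 T v ->
       ((lin_quad T F gradF (u k) (tau k) (u k.+1))%:E + Gfun T beta nu (u k.+1)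
        <= (lin_quad T F gradF (u k) (tau k) v)%:E + Gfun T beta nu v)%E) ->
  (forall k,
     ((eta * nrm2sq T (fun x => u k.+1 x - u k x))%:E
        + ((F (u k.+1))%:E + beta%:E * TV T (u k.+1))
      <= (F (u k))%:E + beta%:E * TV T (u k))%E) ->
  (* ubar in U_ad is the weak-* limit of (u_k) in BV(0,T) *)
  Uad T nu ubar -> weak_star_BV T u ubar ->
  (* conclusion *)
  acc_point tau taubar ->
  forall v, Uad T nu v ->
    ((lin_quad T F gradF ubar taubar ubar)%:E + beta%:E * TV T ubar
     <= (lin_quad T F gradF ubar taubar v)%:E + beta%:E * TV T v)%E.
Proof.
move=> T0 b0 e0 _ _ _ Hgrad [L HL] Uu0 BVu0 tau0 Hmin _ Uub [BVu [BVub [Hcv _]]] Hacc v Uv.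
have Uuk : forall k, Uad T nu (u k).
  case=> [//|k].
  have [_ Hk] := Hmin k.
  have := Hk _ (Uad_L2 Uu0).
  have [r0 Hr0] := TVfin T0 BVu0.
  rewrite /Gfun /deltaUad (asboolT Uu0) Hr0.
  case: (pselect (Uad T nu (u k.+1))) => // nU.
  rewrite (asboolF nU) /= => H; exfalso; move: H.
  have hT : (0 <= beta%:E * TV T (u k.+1))%E.
    by apply: mule_ge0; [rewrite lee_fin ltW | exact: TV_ge0].
  rewrite addey; last by rewrite gt_eqF // (lt_le_trans ltNy0 hT).
  rewrite addey // leye_eq.

have L2u : forall k, L2 T (u k) := fun k => Uad_L2 (Uuk k).
have L2ub := Uad_L2 Uub.
have L2v := Uad_L2 Uv.
have L2g : forall w, L2 T w -> L2 T (gradF w) := fun w hw => (Hgrad w hw).1.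
have L2gb := L2g _ L2ub.
pose del k := Rintegral (@lebesgue_measure R) (Dom T) (fun x => `|u k x - ubar x|).
pose Del k := del k + del k.+1.
have del0 : forall k, 0 <= del k by move=> k; apply: Rintegral_ge0 => x _.
have hDel : Del @ \oo --> (0:R).
  have h1 : [sequence del n.+1]_n @ \oo --> (0:R) by rewrite cvg_shiftS.
  rewrite -(addr0 0); exact: cvgD Hcv h1.
pose M2 := 2 * Mnu nu : R.
have M20 : 0 <= M2 by rewrite /M2 mulr_ge0 // Mnu_ge0.
have qgen : forall k, nrm2sq T (fun x => u k x - ubar x) <= M2 * del k.
  move=> k; apply: ae_Q => //.
  - exact: measurable_realfun.measurable_funB (Uad_meas (Uuk k)) (Uad_meas Uub).
  - exact: intRB (Uad_L1 (Uuk k)) (Uad_L1 Uub).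
  - apply: aeS2 (Uad_bnd (Uuk k)) (Uad_bnd Uub) => x h1 h2 Dx.
    apply: le_trans (ler_normB _ _) _; have := h1 Dx; have := h2 Dx; rewrite /M2; lra.
have qk : forall k, nrm2sq T (fun x => u k x - ubar x) <= M2 * Del k.
  move=> k; apply: le_trans (qgen k) _; apply: ler_wpM2l => //.
  by rewrite /Del lerDl.
have qk1 : forall k, nrm2sq T (fun x => u k.+1 x - ubar x) <= M2 * Del k.
  move=> k; apply: le_trans (qgen k.+1) _; apply: ler_wpM2l => //.
  by rewrite /Del lerDr.
have qkr : forall k, nrm2sq T (fun x => ubar x - u k x) <= M2 * Del k.
  by move=> k; rewrite (@Q_eq _ _ _ (fun x => u k x - ubar x)) // => x; rewrite -sqrrN opprB.
have lip : forall k, nrm2sq T (fun x => gradF (u k) x - gradF ubar x)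
    <= L ^+ 2 * (M2 * Del k).
  move=> k; have := HL (u k) ubar (L2u k) L2ub; rewrite /nrm2.
  set a := nrm2sq T _; set b := nrm2sq T _ => h.
  have a0 : 0 <= a by exact: Q_ge0.
  have bb0 : 0 <= b by exact: Q_ge0.
  have hb : b <= M2 * Del k by exact: qk.
  have sa := sqr_sqrtr a0; have sb := sqr_sqrtr bb0.
  have sa0 := sqrtr_ge0 a.
  have hh : 0 <= Num.sqrt a + L * Num.sqrt b by lra.
  have hab : a <= L ^+ 2 * b.
    rewrite -sa -sb; move: sa sb; rewrite !expr2 => _ _; nra.
  apply: le_trans hab _; apply: ler_wpM2l => //; exact: sqr_ge0.
pose Qvb := nrm2sq T (fun x => v x - ubar x).
have qv : forall k, nrm2sq T (fun x => v x - u k x) <= 2 * Qvb + 2 * (M2 * Del k).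
  move=> k; have := Qdiff (L2B L2v L2ub) (L2B (L2u k) L2ub).
  rewrite (@Q_eq _ _ (fun x => v x - ubar x - (u k x - ubar x)) (fun x => v x - u k x)); last first.
    by move=> x; congr (_ ^+ 2); ring.
  by have := qk k; rewrite /Qvb; lra.

have := TV_ge0 v T0; case HV: (TV T v) => [V| |] // _; last first.
  rewrite (muleC (beta%:E) +oo%E) gt0_mulye ?lte_fin // addey //; exact: leey.
pose cb := inner2 T (gradF ubar) (fun x => v x - ubar x).
have key : forall phi, Cc1 T phi -> (forall x, `|phi x| <= 1) ->
    beta * inner2 T ubar (derive1 phi) <= cb + taubar / 2 * Qvb + beta * V.
  move=> phi hc hb.
  have L2p : L2 T (derive1 phi) := cont_L2 _ hc.2.1.
  pose t k := inner2 T (u k.+1) (derive1 phi).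
  pose a k := inner2 T (gradF (u k)) (fun x => u k.+1 x - u k x).
  pose c k := inner2 T (gradF (u k)) (fun x => v x - u k x).
  pose e k := nrm2sq T (fun x => v x - u k x).
  have ineq : forall k, beta * t k + a k - c k <= tau k / 2 * e k + beta * V.
    move=> k; have [_ Hk] := Hmin k; have := Hk v L2v.
    rewrite /Gfun /deltaUad (asboolT Uv) (asboolT (Uuk k.+1)) HV !adde0.
    have hte := TV_elem (u k.+1) phi hc hb (L2_intM (L2u k.+1) L2p).
    move=> H.
    have H2 : ((lin_quad T F gradF (u k) (tau k) (u k.+1) + beta * t k)%:E <=
               (lin_quad T F gradF (u k) (tau k) v + beta * V)%:E)%E.
      apply: le_trans H; rewrite EFinD EFinM; apply: leeD2l.
      by apply: lee_wpmul2l => //; rewrite lee_fin ltW.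
    move: H2; rewrite lee_fin /lin_quad /t /a /c /e => H2.
    have : 0 <= tau k / 2 * nrm2sq T (fun x => u k.+1 x - u k x).
      by apply: mulr_ge0; [apply: divr_ge0 => //; exact: ltW | exact: Q_ge0].
    lra.

  have ct : t @ \oo --> inner2 T ubar (derive1 phi).
    apply: (@sq_cvg _ _ _ Del (M2 * nrm2sq T (derive1 phi)) 0) => // k.
    rewrite mul0r addr0.
    have -> : t k - inner2 T ubar (derive1 phi) =
              inner2 T (fun x => u k.+1 x - ubar x) (derive1 phi).
      by apply: RintB_eq; [exact: L2_intM (L2u _) L2p | exact: L2_intM L2ub L2p |
        move=> x; ring].
    apply: le_trans (CS (L2B (L2u k.+1) L2ub) L2p) _.
    rewrite mulrAC; apply: ler_wpM2r; [exact: Q_ge0 | exact: qk1].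
  have ca : a @ \oo --> (0:R).
    apply: (@sq_cvg _ _ _ Del (2 * nrm2sq T (gradF ubar) * (4 * M2))
                              (2 * L ^+ 2 * M2 * (4 * M2))) => // k.
    rewrite subr0.
    apply: le_trans (CS (L2g _ (L2u k)) (L2B (L2u k.+1) (L2u k))) _.
    have hg : nrm2sq T (gradF (u k)) <= 2 * nrm2sq T (gradF ubar) + 2 * L ^+ 2 * M2 * Del k.
      have := Qsum (L2B (L2g _ (L2u k)) L2gb) L2gb.
      rewrite (@Q_eq _ _ (fun x => gradF (u k) x - gradF ubar x + gradF ubar x) (gradF (u k)));
        last by move=> x; rewrite subrK.
      by have := lip k; lra.
    have hw : nrm2sq T (fun x => u k.+1 x - u k x) <= 4 * M2 * Del k.
      have := Qdiff (L2B (L2u k.+1) L2ub) (L2B (L2u k) L2ub).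
      rewrite (@Q_eq _ _ (fun x => u k.+1 x - ubar x - (u k x - ubar x)) (fun x => u k.+1 x - u k x));
        last by move=> x; congr (_ ^+ 2); ring.
      by have := qk k; have := qk1 k; lra.
    have := ler_pM (Q_ge0 _ _) (Q_ge0 _ _) hg hw.
    move=> h; apply: le_trans h _; lra.
  have cc : c @ \oo --> cb.
    apply: (@sq_cvg _ _ _ Del (2 * (2 * Qvb * (L ^+ 2 * M2)) + 2 * (nrm2sq T (gradF ubar) * M2))
                              (2 * (2 * M2 * (L ^+ 2 * M2)))) => // k.
    have -> : c k - cb =
      inner2 T (fun x => gradF (u k) x - gradF ubar x) (fun x => v x - u k x) +
      inner2 T (gradF ubar) (fun x => ubar x - u k x).
      rewrite /c /cb (RintB_eq _ _ (fun x => (gradF (u k) x - gradF ubar x) * (v x - u k x)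
           + gradF ubar x * (ubar x - u k x))); first last.
      - by move=> x; ring.
      - exact: L2_intM L2gb (L2B L2v L2ub).
      - exact: L2_intM (L2g _ (L2u k)) (L2B L2v (L2u k)).
      apply/esym/RintD_eq.
      - exact: L2_intM (L2B (L2g _ (L2u k)) L2gb) (L2B L2v (L2u k)).
      - exact: L2_intM L2gb (L2B L2ub (L2u k)).
      - by [].
    set x1 := inner2 T _ _; set x2 := inner2 T _ _.
    have h1 : x1 ^+ 2 <= (L ^+ 2 * (M2 * Del k)) * (2 * Qvb + 2 * (M2 * Del k)).
      apply: le_trans (CS (L2B (L2g _ (L2u k)) L2gb) (L2B L2v (L2u k))) _.
      apply: ler_pM; [exact: Q_ge0 | exact: Q_ge0 | exact: lip | exact: qv].
    have h2 : x2 ^+ 2 <= nrm2sq T (gradF ubar) * (M2 * Del k).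
      apply: le_trans (CS L2gb (L2B L2ub (L2u k))) _.
      apply: ler_wpM2l; [exact: Q_ge0 | exact: qkr].
    have h3 := sqr_ge0 (x1 - x2).
    move: h1 h2 h3; rewrite !expr2 => h1 h2 h3; lra.
  have ce : e @ \oo --> Qvb.
    apply: (@sq_cvg _ _ _ Del (6 * Qvb * M2) (4 * M2 * M2)) => // k.
    have -> : e k - Qvb = inner2 T (fun x => ubar x - u k x)
                           (fun x => (v x - u k x) + (v x - ubar x)).
      apply: RintB_eq; [exact: L2_sq (L2B L2v (L2u k)) | exact: L2_sq (L2B L2v L2ub) |].
      by move=> x; ring.
    apply: le_trans (CS (L2B L2ub (L2u k)) (L2D (L2B L2v (L2u k)) (L2B L2v L2ub))) _.
    have hw := Qsum (L2B L2v (L2u k)) (L2B L2v L2ub).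
    have := ler_pM (Q_ge0 _ _) (Q_ge0 _ _) (qkr k) (le_trans hw (lerD (ler_wpM2l (ler0n _ 2) (qv k)) (lexx _))).
    move=> h; apply: le_trans h _; rewrite /Qvb; lra.
  have cs : (fun k => beta * t k + a k - c k) @ \oo --> beta * inner2 T ubar (derive1 phi) + 0 - cb.
    apply: cvgB => //; apply: cvgD => //; apply: cvgM => //; exact: cvg_cst.
  have := @final_lim _ _ _ _ _ _ _ _ cs ce Hacc ineq.
  rewrite addr0; lra.

have hTV : (TV T ubar <= ((cb + taubar / 2 * Qvb + beta * V) / beta)%:E)%E.
  apply: ge_ereal_sup => _ [phi [hc hb ->]].
  have := key phi hc hb.
  have fin := integrable_fin_num (mD T) (L2_intM L2ub (cont_L2 _ hc.2.1)).
  rewrite -(fineK fin) lee_fin ler_pdivlMr //.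
  rewrite /inner2 /Rintegral; lra.
rewrite /lin_quad.
have z1 : inner2 T (gradF ubar) (fun x => ubar x - ubar x) = 0.
  rewrite /inner2 (_ : Rintegral _ _ _ = Rintegral (@lebesgue_measure R) (Dom T) (fun _ => 0)).
    by rewrite Rintegral_cst ?mul0r //; exact: mD.
  by apply: eq_Rintegral => x _; rewrite subrr mulr0.
have z2 : nrm2sq T (fun x => ubar x - ubar x) = 0.
  rewrite /nrm2sq (_ : Rintegral _ _ _ = Rintegral (@lebesgue_measure R) (Dom T) (fun _ => 0)).
    by rewrite Rintegral_cst ?mul0r //; exact: mD.
  by apply: eq_Rintegral => x _; rewrite subrr expr0n.
rewrite z1 z2 mulr0 !addr0.
apply: le_trans (leeD2l _ (lee_wpmul2l _ hTV)) _; first by rewrite lee_fin ltW.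
rewrite -!EFinM -!EFinD lee_fin.
rewrite mulrC divfK ?gt_eqF //.
rewrite /cb /Qvb; lra.
Qed.
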